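(* Let $\mathcal{M}_1,\dots,\mathcal{M}_k$ be register automata over the alphabet $\Sigma=\{<,=,>\}$, each having the incremental-automaton property, and let $\mathcal{I}=\mathcal{M}_1\cap\dots\cap\mathcal{M}_k$ be their intersection. Let $e,e_0,e_1,\dots,e_k\in\mathbb{Z}$ and let $X=\langle X_1,\dots,X_n\rangle$ be an accepting sequence with respect to $\mathcal{I}$, where $(R_1,\dots,R_k)$ is the vector of values returned by $\mathcal{I}$ after consuming the signature of $X$, and set $v=e+e_0\cdot n+\sum_{i=1}^k e_i\cdot R_i$. Then the weight of $X$ in the invariant digraph $D(\mathcal{I},v)$ is less than or equal to $e+e_0\cdot n+\sum_{i=1}^k e_i\cdot R_i$.
   Context: Signature: for an integer sequence $X=\langle X_1,\dots,X_n\rangle$, its signature is the word $S=\langle S_1,\dots,S_{n-1}\rangle$ over $\Sigma=\{<,=,>\}$ with $S_i$ equal to $<$, $=$ or $>$ according as $X_i<X_{i+1}$, $X_i=X_{i+1}$, $X_i>X_{i+1}$ (the signature has arity $p=2$). Register automaton: a tuple $(Q,\Sigma,\delta,q_0,I,A,\alpha)$ with finite state set $Q$, input alphabet $\Sigma$, a (deterministic, possibly partial) transition function $\delta:(Q\times\mathbb{Z}^r)\times\Sigma\to Q\times\mathbb{Z}^r$ ($r\ge1$ registers), initial state $q_0$, initial register values $I\in\mathbb{Z}^r$, accepting states $A\subseteq Q$, and acceptance function $\alpha:\mathbb{Z}^r\to\mathbb{Z}$. Consuming a word from $(q_0,I)$ triggers a sequence of transitions; if it ends in an accepting state with register values $d$,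 the automaton returns $\alpha(d)$, otherwise it fails. A sequence $X$ is accepting w.r.t. an automaton if the automaton does not fail on the signature of $X$. Incremental-automaton property of an automaton with registers $A_1,\dots,A_r$: (1) every initial value $I_j$ is in $\mathbb{N}$; (2) on every transition $t$, each register is updated as $A_j\leftarrow \alpha^t_{j,0}+\sum_{i=1}^r\alpha^t_{j,i}A_i$ with $\alpha^t_{j,0}\in\mathbb{N}$ and $\alpha^t_{j,i}\in\{0,1\}$; (3) the register $A_r$ (main register) satisfies: (a) the returned value is the final value of $A_r$, (b) $\alpha^t_{r,r}=1$ for every transition $t$, (c) there is a non-empty set $T$ of transitions with $\sum_{i=1}^{r-1}\alpha^t_{r,i}>0$ for all $t\in T$; (4) for every other register $A_j$, $j<r$ (potential registers), on every transition $t$ we have $\sum_{i\ne j}\alpha^t_{j,i}=0$, and if $\alpha^t_{r,j}>0$ then $\alpha^t_{j,j}=0$. Intersection $\mathcal{I}=\mathcal{M}_1\cap\dots\cap\mathcal{M}_k$: the product automaton reading each letter simultaneously in all $\mathcal{M}_i$; its states are tuples of states, its registers are the disjoint union of the registers of the $\mathcal{M}_i$ (not merged), each updated as in its own $\mathcal{M}_i$; a state is accepting iff all components are; it returns $(R_1,\dots,R_k)$ where $R_i$ is the value returned by $\mathcal{M}_i$. For a transition $t$ of $\mathcal{I}$, $\alpha^t_{i,j,0}$ denotes the constant term in the update of the register of $\mathcal{I}$ corresponding to register $j$ of $\mathcal{M}_i$, and $I_{i,j}$ its initial value; $r_i$ is the number of registers of $\mathcal{M}_i$ (register $r_i$ being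 its main register). Invariant digraph $D(\mathcal{I},v)$ for $v=e+e_0n+\sum_i e_iR_i$: nodes are the states of $\mathcal{I}$; each transition $t$ of $\mathcal{I}$ gives an arc with weight $e_0+\sum_{i=1}^k e_i\beta_i^t$, where $\beta_i^t=\alpha^t_{i,r_i,0}$ if $e_i\ge0$ and $\beta_i^t=\sum_{j=1}^{r_i}\alpha^t_{i,j,0}$ if $e_i<0$. Walk and weight of an accepting sequence $X$: the walk of $X$ is the path in $D(\mathcal{I},v)$ formed by the arcs of the transitions triggered when consuming the signature of $X$. The weight of $X$ is the weight of this walk plus the initialisation weight $e+e_0\cdot(p-1)+\sum_{i=1}^k e_i\beta_i^0$ with $p=2$, where $\beta_i^0=I_{i,r_i}$ if $e_i\ge0$ and $\beta_i^0=\sum_{j=1}^{r_i}I_{i,j}$ if $e_i<0$. *)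

(* Defs.v *)
From mathcomp Require Import all_boot all_order all_algebra.
Set Implicit Arguments. Unset Strict Implicit. Unset Printing Implicit Defensive.
Import Order.TTheory GRing.Theory Num.Theory.
Local Open Scope ring_scope.

Inductive sigletter := SLt | SEq | SGt.

Definition sig_of (a b : int) : sigletter :=
  if a < b then SLt else if a == b then SEq else SGt.

Definition signature (X : seq int) : seq sigletter :=
  [seq sig_of x.1 x.2 | x <- zip X (behead X)].

Definition sig_arity : nat := 2.

(** A deterministic (partial) register automaton whose transitions are the
    arcs q --s--> q' (given by [ra_delta]) and whose register updates are
    given by coefficients: on transition (q,s),
      A_j <- ra_cst q s j + \sum_i ra_coef q s j i * A_i.
    Registers are indexed by 'I_(ra_nreg.+1) (so r = ra_nreg + 1 >= 1);
    the register r (main register) is [ord_max]. *)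
Record regaut := RegAut {
  ra_state : finType;
  ra_nreg : nat;
  ra_delta : ra_state -> sigletter -> option ra_state;
  ra_cst : ra_state -> sigletter -> 'I_ra_nreg.+1 -> int;
  ra_coef : ra_state -> sigletter -> 'I_ra_nreg.+1 -> 'I_ra_nreg.+1 -> int;
  ra_q0 : ra_state;
  ra_init : 'I_ra_nreg.+1 -> int;
  ra_acc : pred ra_state;
  ra_alpha : ('I_ra_nreg.+1 -> int) -> int }.

Definition regs (M : regaut) := 'I_(ra_nreg M).+1 -> int.
Arguments ra_cst : clear implicits.
Arguments ra_coef : clear implicits.
Arguments ra_delta : clear implicits.
Arguments ra_init : clear implicits.
Arguments ra_acc : clear implicits.
Arguments ra_alpha : clear implicits.
Arguments ra_q0 : clear implicits.

Definition upd (M : regaut) (q : ra_state M) (s : sigletter) (d : regs M) : regs M :=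
  fun j => ra_cst M q s j + \sum_(i < (ra_nreg M).+1) ra_coef M q s j i * d i.
Arguments upd : clear implicits.

Definition incremental (M : regaut) : Prop :=
  (forall j, 0 <= ra_init M j) /\
  (forall q s, ra_delta M q s <> None -> forall j,
      0 <= ra_cst M q s j /\ (forall i, ra_coef M q s j i \in [:: 0; 1])) /\
  (forall d, ra_alpha M d = d ord_max) /\
  (forall q s, ra_delta M q s <> None -> ra_coef M q s ord_max ord_max = 1) /\
  (exists q s, ra_delta M q s <> None /\
      0 < \sum_(i < (ra_nreg M).+1 | i != ord_max) ra_coef M q s ord_max i) /\
  (forall q s, ra_delta M q s <> None -> forall j : 'I_(ra_nreg M).+1, j != ord_max ->
      \sum_(i < (ra_nreg M).+1 | i != j) ra_coef M q s j i = 0 /\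
      (0 < ra_coef M q s ord_max j -> ra_coef M q s j j = 0)).

Section Inter.
Variables (k : nat) (M : 'I_k -> regaut).

Definition pstate := forall i : 'I_k, ra_state (M i).
Definition pregs := forall i : 'I_k, regs (M i).

Definition pq0 : pstate := fun i => ra_q0 (M i).
Definition pinit : pregs := fun i => ra_init (M i).

Definition pdelta (p : pstate) (s : sigletter) : option pstate :=
  if [forall i, ra_delta (M i) (p i) s != None] then
    Some (fun i => odflt (p i) (ra_delta (M i) (p i) s))
  else None.

Definition pupd (p : pstate) (s : sigletter) (d : pregs) : pregs :=
  fun i => upd (M i) (p i) s (d i).

Fixpoint prun (p : pstate) (d : pregs) (w : seq sigletter) : option (pstate * pregs) :=
  match w with
  | [::] => Some (p, d)
  | s :: w' => match pdelta p s with
               | Some p' => prun p' (pupd p s d) w'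
               | None => None
               end
  end.

(** Consuming the signature of X from (q0, I): [Some R] (the vector of values
    (R_1..R_k) returned by I) if X is accepting, [None] if I fails. *)
Definition inter_result (X : seq int) : option ('I_k -> int) :=
  match prun pq0 pinit (signature X) with
  | Some (p, d) => if [forall i, ra_acc (M i) (p i)]
                   then Some (fun i => ra_alpha (M i) (d i)) else None
  | None => None
  end.

Fixpoint pwalk (p : pstate) (w : seq sigletter) : seq (pstate * sigletter) :=
  match w with
  | [::] => [::]
  | s :: w' => match pdelta p s with
               | Some p' => (p, s) :: pwalk p' w'
               | None => [::]
               end
  end.

(** Invariant digraph D(I, v), v = e + e0 n + sum_i es_i R_i:
    weight of the arc of transition t = (p, s). *)
Definition beta (i : 'I_k) (ei : int) (q : ra_state (M i)) (s : sigletter) : int :=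
  if 0 <= ei then ra_cst (M i) q s ord_max
  else \sum_(j < (ra_nreg (M i)).+1) ra_cst (M i) q s j.

Definition arc_weight (e0 : int) (es : 'I_k -> int) (t : pstate * sigletter) : int :=
  e0 + \sum_(i < k) es i * beta (es i) (t.1 i) t.2.

Definition beta0 (i : 'I_k) (ei : int) : int :=
  if 0 <= ei then ra_init (M i) ord_max
  else \sum_(j < (ra_nreg (M i)).+1) ra_init (M i) j.

Definition seq_weight (e e0 : int) (es : 'I_k -> int) (X : seq int) : int :=
  e + e0 * (sig_arity.-1)%:Z + \sum_(i < k) es i * beta0 i (es i)
  + \sum_(t <- pwalk pq0 (signature X)) arc_weight e0 es t.

End Inter.

(* Main.v *)
Require Import Defs.
From mathcomp Require Import all_boot all_order all_algebra.
From mathcomp Require Import ring.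
Import Order.TTheory GRing.Theory Num.Theory.
Set Implicit Arguments.
Local Open Scope ring_scope.

Section One.
Variable N : regaut.
Hypothesis H : incremental N.

Lemma upd_nonneg q s (Hd : ra_delta N q s <> None) (d : regs N) :
  (forall j, 0 <= d j) -> forall j, 0 <= upd N q s d j.
Proof.
case: H => _ [H2 _] Hd0 j; rewrite /upd; case: (H2 q s Hd j) => c0 coef.
apply: addr_ge0 => //; apply: sumr_ge0 => i _; apply: mulr_ge0 => //.
by move: (coef i); rewrite !inE => /orP[]/eqP->.
Qed.

Lemma upd_main q s (Hd : ra_delta N q s <> None) (d : regs N) :
  (forall j, 0 <= d j) ->
  d ord_max + ra_cst N q s ord_max <= upd N q s d ord_max.
Proof.
case: H => _ [H2 [_ [H3 _]]] Hd0; rewrite /upd (bigD1 ord_max) //= H3 // mul1r.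
rewrite [leLHS]addrC lerD2l lerDl; apply: sumr_ge0 => i _; apply: mulr_ge0 => //.
by case: (H2 q s Hd ord_max) => _ /(_ i); rewrite !inE => /orP[]/eqP->.
Qed.

Lemma coef_col q s (Hd : ra_delta N q s <> None) (i : 'I_(ra_nreg N).+1) :
  \sum_j ra_coef N q s j i <= 1.
Proof.
case: H => _ [H2 [_ [H3 [_ H4]]]].
have c01 : forall j i, ra_coef N q s j i = 0 \/ ra_coef N q s j i = 1.
  by move=> j i'; case: (H2 q s Hd j) => _ /(_ i'); rewrite !inE => /orP[]/eqP->; auto.
have z : forall j, j != ord_max -> i != j -> ra_coef N q s j i = 0.
  move=> j jr ij; case: (H4 q s Hd j jr) => /psumr_eq0P P _; apply: P => //.
  by move=> l _; case: (c01 j l) => ->.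
rewrite (bigD1 ord_max) //=.
have [ei|ir] := eqVneq i ord_max.
  rewrite ei H3 // big1 ?addr0 // => j jr; rewrite -ei; apply: z => //; by rewrite ei eq_sym.
rewrite (bigD1 i) //= big1 ?addr0.
  case: (H4 q s Hd i ir) => _ P.
  case: (c01 ord_max i) => E; rewrite E; last by rewrite P ?E // addr0.
  by rewrite add0r; case: (c01 i i) => ->.
by move=> j /andP[jr ji]; apply: z => //; rewrite eq_sym.
Qed.

Lemma upd_sum q s (Hd : ra_delta N q s <> None) (d : regs N) :
  (forall j, 0 <= d j) ->
  \sum_j upd N q s d j <= \sum_j d j + \sum_j ra_cst N q s j.
Proof.
move=> Hd0; rewrite /upd big_split /= addrC lerD2r exchange_big /=.
apply: ler_sum => i _; rewrite -mulr_suml.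
by rewrite -[leRHS]mul1r ler_wpM2r // coef_col.
Qed.
End One.

Section Prod.
Variables (k : nat) (M : 'I_k -> regaut).
Hypothesis Hinc : forall i, incremental (M i).
Variable es : 'I_k -> int.

Definition bst (d : pregs M) (i : 'I_k) : int :=
  if 0 <= es i then d i ord_max else \sum_j d i j.

Lemma pdelta_def p s p' : pdelta p s = Some p' -> forall i, ra_delta (M i) (p i) s <> None.
Proof. by rewrite /pdelta; case: ifP => // /forallP H _ i; apply/eqP. Qed.
Arguments pdelta_def [p s p'] _ i.

Lemma step p s p' (d : pregs M) : pdelta p s = Some p' -> (forall i j, 0 <= d i j) ->
  forall i, es i * bst d i + es i * beta (es i) (p i) s <= es i * bst (pupd p s d) i.
Proof.
move=> Hp Hd i; have Hdi := pdelta_def Hp i.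
rewrite -mulrDr /bst /beta /pupd; case: ifP => Hes.
  by apply: ler_wpM2l => //; apply: upd_main.
have Hlt : es i < 0 by rewrite ltNge Hes.
rewrite ler_nM2l //; exact: upd_sum.
Qed.
Arguments step [p s p' d] _ _ i.

Lemma pupd_nonneg p s p' (d : pregs M) : pdelta p s = Some p' -> (forall i j, 0 <= d i j) ->
  forall (i : 'I_k) j, 0 <= @pupd _ M p s d i j.
Proof. by move=> Hp Hd i; apply: upd_nonneg => //; apply: pdelta_def Hp i. Qed.
Arguments pupd_nonneg [p s p' d] _ _ i j.

Lemma run w : forall p (d : pregs M) p' d', prun p d w = Some (p', d') ->
  (forall i j, 0 <= d i j) ->
  [/\ size (pwalk p w) = size w, (forall i j, 0 <= d' i j) &
   forall i, es i * bst d i + \sum_(t <- pwalk p w) es i * beta (es i) (t.1 i) t.2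
             <= es i * bst d' i].
Proof.
elim: w => [|s w IH] p d p' d' /=.
  by move=> [_ <-] Hd; split => // i; rewrite big_nil addr0.
case E: pdelta => [p1|] // Hr Hd.
have Hd1 := pupd_nonneg E Hd.
have [IH1 IH2 IH3] := IH _ _ _ _ Hr Hd1.
split => //; first by rewrite /= IH1.
move=> i; rewrite big_cons /= addrA; apply: le_trans (IH3 i); rewrite lerD2r.
exact: (step E Hd i).
Qed.

Lemma sum_const_seq (T : Type) (s : seq T) (c : int) : \sum_(t <- s) c = c * (size s)%:Z.
Proof.
elim: s => [|a s IH]; first by rewrite big_nil mulr0.
by rewrite big_cons IH /= -addn1 PoszD mulrDr mulr1 addrC.
Qed.

End Prod.

Unset Implicit Arguments.

Theorem theorem1 (k : nat) (M : 'I_k -> regaut)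
  (Hinc : forall i, incremental (M i))
  (e e0 : int) (es : 'I_k -> int) (X : seq int) (R : 'I_k -> int) :
  (0 < size X)%N ->
  inter_result M X = Some R ->
  seq_weight M e e0 es X <= e + e0 * (size X)%:Z + \sum_(i < k) es i * R i.
Proof.
move=> Hn; rewrite /inter_result; case E: prun => [[p d]|] //; case: ifP => // _ [<-].
have Hinit : forall (i : 'I_k) j, 0 <= @pinit _ M i j.
  by move=> i j; case: (Hinc i) => H _; apply: H.
have [Hs Hnn Hi] := run Hinc es _ _ _ E Hinit.
have Hsz : size (signature X) = (size X).-1.
  by rewrite /signature size_map size_zip size_behead; case: (size X) => //= n; rewrite minnE subKn.
rewrite /seq_weight /arc_weight big_split /= sum_const_seq Hs Hsz.
rewrite (exchange_big_dep xpredT) //=.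
have -> : e + e0 * (sig_arity.-1)%:Z + \sum_(i < k) es i * beta0 M i (es i) +
  (e0 * ((size X).-1)%:Z + \sum_(j < k) \sum_(i <- pwalk (pq0 M) (signature X)) es j * beta (es j) (i.1 j) i.2)
  = e + e0 * (size X)%:Z + \sum_(i < k) (es i * beta0 M i (es i) +
     \sum_(t <- pwalk (pq0 M) (signature X)) es i * beta (es i) (t.1 i) t.2).
  rewrite big_split /=.
  have -> : (size X)%:Z = 1 + ((size X).-1)%:Z by rewrite -PoszD add1n prednK.
  rewrite /sig_arity /= mulrDr mulr1; ring.
rewrite lerD2l; apply: ler_sum => i _.
apply: le_trans (Hi i) _.
have -> : ra_alpha (M i) (d i) = d i ord_max by case: (Hinc i) => _ [_ [H _]]; apply: H.
rewrite /bst; case: ifP => Hes //=.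
have Hlt : es i < 0 by rewrite ltNge Hes.
rewrite ler_nM2l // (bigD1 ord_max) //= lerDl; apply: sumr_ge0 => j _; exact: Hnn.
Qed.
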